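(* A digraph $D$ of order $n$ is minimally strong subgraph $(2,n-2)$-arc-connected if and only if $D$ is obtained from the complete digraph $\overleftrightarrow{K}_n$ by deleting an arc set $M$ such that $\overleftrightarrow{K}_n[M]$ is a union of vertex-disjoint cycles which cover all but at most one vertex of $\overleftrightarrow{K}_n$.
   Context: Digraphs are finite, without loops or parallel arcs; cycles are directed cycles, including 2-cycles. $\overleftrightarrow{K}_n$ is the complete digraph on $n$ vertices; $\overleftrightarrow{K}_n[M]$ is the subdigraph formed by the arcs of $M$ and their end-vertices. For $S\subseteq V(D)$, $\lambda_S(D)$ is the maximum number of pairwise arc-disjoint strong subgraphs of $D$ containing $S$, and $\lambda_k(D)=\min\{\lambda_S(D): S\subseteq V(D), |S|=k\}$. $D$ is minimally strong subgraph $(k,\ell)$-arc-connected if $\lambda_k(D)\ge\ell$ but $\lambda_k(D-e)\le \ell-1$ for every arc $e$ of $D$. *)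

(* Defs.v *)
From mathcomp Require Import all_boot.
Set Implicit Arguments. Unset Strict Implicit. Unset Printing Implicit Defensive.

(* A digraph on the finite vertex type T (vertex set = all of T, order #|T|)
   is given by its arc set D : {set T * T}; it is loopless when every arc
   (x, y) has x != y.  No parallel arcs by construction. *)

Section Digraphs.
Variable T : finType.

Definition complete_arcs : {set T * T} := [set p | p.1 != p.2].

Definition loopless (D : {set T * T}) : bool := D \subset complete_arcs.

Definition strong_sub_containing (D : {set T * T}) (S : {set T})
    (H : {set T} * {set T * T}) : bool :=
  let V := H.1 in let A := H.2 in
  [&& A \subset D,
      [forall p in A, (p.1 \in V) && (p.2 \in V)],
      S \subset V &
      [forall u in V, forall v in V, connect [rel x y | (x, y) \in A] u v]].

Definition packing (D : {set T * T}) (S : {set T}) (m : nat) : bool :=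
  [exists f : {ffun 'I_m -> {set T} * {set T * T}},
     [forall i, strong_sub_containing D S (f i)] &&
     [forall i, forall j, (i != j) ==> [disjoint (f i).2 & (f j).2]]].

(* For |S| >= 2 every such subgraph has an arc, so this number
   is at most #|T|^2 and the bound below is never reached. *)
Definition lambdaS (D : {set T * T}) (S : {set T}) : nat :=
  \max_(m < (#|T| ^ 2).+2 | packing D S m) m.

Definition lambdak (D : {set T * T}) (k : nat) : nat :=
  \big[minn/(#|T| ^ 2).+1]_(S : {set T} | #|S| == k) lambdaS D S.

(* minimally strong subgraph (k,l)-arc-connected; "lambda_k(D-e) <= l-1"
   is written as lambda_k(D-e) < l (integer reading). *)
Definition minimally_strong_arc_conn (D : {set T * T}) (k l : nat) : Prop :=
  l <= lambdak D k /\ forall e, e \in D -> lambdak (D :\ e) k < l.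

(* the arc set of a family C of cycles, each cycle a sequence of distinct
   vertices x_1 ... x_r (r >= 2) with arcs x_i -> x_{i+1} and x_r -> x_1 *)
Definition cycles_arcs (C : seq (seq T)) : {set T * T} :=
  [set p | has (fun c => (p.1 \in c) && (p.2 == next c p.1)) C].

Definition disjoint_cycles_cover_but_one (M : {set T * T}) : Prop :=
  exists C : seq (seq T),
    [/\ all (fun c => 2 <= size c) C,
        uniq (flatten C),
        M = cycles_arcs C &
        #|[set x | x \notin flatten C]| <= 1].

End Digraphs.

(* Main.v *)
Require Import Defs.
From mathcomp Require Import all_boot zify.
Set Implicit Arguments. Unset Strict Implicit. Unset Printing Implicit Defensive.


Section Main.
Variable T : finType.
Implicit Types (D : {set T * T}) (f : T -> T) (W : {set T}).

Definition arel (A : {set T * T}) : rel T := [rel a b | (a, b) \in A].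

Fixpoint path_arcs (a : T) (s : seq T) : seq (T * T) :=
  if s is b :: s' then (a, b) :: path_arcs b s' else [::].
Definition cyc_arcs (c : seq T) : seq (T * T) :=
  if c is a :: s then path_arcs a (rcons s a) else [::].
Definition HV (cs : seq (seq T)) : {set T} := [set v | has (fun c => v \in c) cs].
Definition HA (cs : seq (seq T)) : {set T * T} :=
  [set p | p \in flatten (map cyc_arcs cs)].
Definition mkH cs := (HV cs, HA cs).
Definition star (cs : seq (seq T)) :=
  if cs is c0 :: cs' then (c0 != [::]) && all (fun c => has (mem c0) c) cs' else true.

Lemma path_arcs_path (A : {set T * T}) a s :
  {subset path_arcs a s <= A} -> path (arel A) a s.
Proof.
elim: s a => //= b s IH a sub; apply/andP; split.
  by apply: (sub (a, b)); rewrite inE eqxx.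
by apply: IH => p ps; apply: sub; rewrite inE ps orbT.
Qed.

Lemma path_arcs_mem a s p : p \in path_arcs a s -> (p.1 \in a :: s) && (p.2 \in s).
Proof.
elim: s a => //= b s IH a; rewrite inE => /orP[/eqP -> | /IH]; first by rewrite /= !inE !eqxx.
by case/andP; rewrite !inE => -> ->; rewrite !orbT.
Qed.

Lemma cyc_arcs_mem c p : p \in cyc_arcs c -> (p.1 \in c) && (p.2 \in c).
Proof.
case: c => //= a s /path_arcs_mem /andP[h1 h2].
rewrite mem_rcons in h2; rewrite h2 andbT.
by move: h1; rewrite inE mem_rcons => /orP[/eqP->|//]; rewrite inE eqxx.
Qed.

Lemma HA_mem cs p : p \in HA cs -> (p.1 \in HV cs) && (p.2 \in HV cs).
Proof.
rewrite inE => /flatten_mapP [c cin /cyc_arcs_mem /andP[h1 h2]].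
by rewrite !inE; apply/andP; split; apply/hasP; exists c.
Qed.

Lemma cyc_in_HA cs c : c \in cs -> cycle (arel (HA cs)) c.
Proof.
move=> cin; case: c cin => //= a s cin; apply: path_arcs_path => p pin.
by rewrite inE; apply/flatten_mapP; exists (a :: s).
Qed.

Lemma star_strong cs : star cs ->
  {in HV cs &, forall u v, connect (arel (HA cs)) u v}.
Proof.
case: cs => [|c0 cs] /=; first by move=> _ u v; rewrite inE.
case: c0 => [//|h c0'] /= /allP st.
set cs1 := (h :: c0') :: cs.
have cyc c : c \in cs1 -> {in c &, forall u v, connect (arel (HA cs1)) u v}.
  by move=> cin; apply: connect_cycle; apply: cyc_in_HA.
have c0in : (h :: c0') \in cs1 by rewrite inE eqxx.
have toh u : u \in HV cs1 -> connect (arel (HA cs1)) u h /\ connect (arel (HA cs1)) h u.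
  rewrite inE => /hasP [c cin uc].
  move: cin; rewrite inE => /orP[/eqP ceq | cin].
    subst c; split; apply: (cyc _ c0in) => //; by rewrite inE eqxx.
  have /hasP [w wc wc0] := st c cin.
  have cin1 : c \in cs1 by rewrite inE cin orbT.
  split.
    apply: (connect_trans (cyc _ cin1 u w uc wc)).
    by apply: (cyc _ c0in) => //; rewrite inE eqxx.
  apply: (connect_trans _ (cyc _ cin1 w u wc uc)).
  by apply: (cyc _ c0in) => //; rewrite inE eqxx.
move=> u v uin vin; have [h1 _] := toh u uin; have [_ h2] := toh v vin.
exact: connect_trans h1 h2.
Qed.

Lemma mkH_strong D (S : {set T}) cs : star cs -> all (mem D) (flatten (map cyc_arcs cs)) ->
  S \subset HV cs -> strong_sub_containing D S (mkH cs).
Proof.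
move=> st /allP al sub; rewrite /strong_sub_containing /=.
apply/and4P; split => //.
- by apply/subsetP => p; rewrite inE => /al.
- by apply/forall_inP => p /HA_mem.
- apply/forall_inP => u uin; apply/forall_inP => v vin.
  exact: (star_strong st uin vin).
Qed.

Lemma strong_mono D D' (S : {set T}) H : D \subset D' ->
  strong_sub_containing D S H -> strong_sub_containing D' S H.
Proof.
move=> sDD' /and4P[h1 h2 h3 h4]; apply/and4P; split => //.
exact: subset_trans h1 sDD'.
Qed.

End Main.


Section Two.
Variable T : finType.
Implicit Types (D : {set T * T}) (f g : T -> T) (W : {set T}).

Definition permW W f := {in W, forall u, f u \in W} /\ {in W &, injective f}.
Definition Dset W f : {set T * T} :=
  [set p | [&& p.1 \in W, p.2 \in W, p.1 != p.2 & f p.1 != p.2]].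
Definition disjL (L : seq ({set T} * {set T * T})) :=
  pairwise (fun H1 H2 : {set T} * {set T * T} => [disjoint H1.2 & H2.2]) L.
Definition goodL D (S : {set T}) k := exists L : seq ({set T} * {set T * T}),
  [/\ size L = k, all (strong_sub_containing D S) L & disjL L].

Lemma inD W f u v : ((u, v) \in Dset W f) = [&& u \in W, v \in W, u != v & f u != v].
Proof. by rewrite inE. Qed.

Lemma goodL0 D S : goodL D S 0.
Proof. by exists [::]. Qed.

Lemma ext_step D D' (S : {set T}) k cs : goodL D' S k -> D' \subset D -> star cs ->
  all (fun p => (p \in D) && (p \notin D')) (flatten (map (@cyc_arcs T) cs)) ->
  S \subset HV cs -> goodL D S k.+1.
Proof.
move=> [L [sz al dj]] sub st arcs sS; exists (mkH cs :: L); split.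
- by rewrite /= sz.
- rewrite /= (mkH_strong st) //=; last first.
    by apply/allP => p /(allP arcs) /andP[].
  by apply/allP => H /(allP al); apply: strong_mono.
- rewrite /disjL pairwise_cons; move: dj; rewrite /disjL => ->; rewrite andbT; apply/allP => H /(allP al) /and4P[hs _ _ _].
  rewrite disjoints_subset; apply/subsetP => p; rewrite inE => /(allP arcs) /andP[_ pn].
  by rewrite inE; apply: contra pn => /(subsetP hs).
Qed.

Definition byp f z u := if f u == z then f z else f u.

Lemma inj_ne W f u v : permW W f -> u \in W -> v \in W -> u != v -> f u != f v.
Proof. by move=> [_ inj] uW vW; apply: contra => /eqP /inj -> //. Qed.

Lemma perm_byp W f z : permW W f -> z \in W -> permW (W :\ z) (byp f z).
Proof.
move=> [mW inj] zW; split.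
  move=> u; rewrite in_setD1 => /andP[uz uW]; rewrite /byp.
  case: (eqVneq (f u) z) => fuz; rewrite in_setD1.
    rewrite mW // andbT; apply/eqP => fzz.
    by move/eqP: uz; apply; apply: inj => //; rewrite fuz fzz.
  by rewrite mW // andbT.
move=> u v; rewrite !in_setD1 /byp => /andP[uz uW] /andP[vz vW].
case: (eqVneq (f u) z) => fuz; case: (eqVneq (f v) z) => fvz.
- by move=> _; apply: inj => //; rewrite fuz fvz.
- by move=> e; move/eqP: vz; case; apply: inj.
- by move=> e; move/eqP: uz; case; apply: inj.
- by apply: inj.
Qed.

Lemma Dset_byp W f z : Dset (W :\ z) (byp f z) \subset Dset W f.
Proof.
apply/subsetP => [[u v]]; rewrite !inD !in_setD1 /byp.
case/and4P => /andP[_ ->] /andP[vz ->] -> /=.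
by case: (eqVneq (f u) z) => [fuz _|_ //]; rewrite fuz eq_sym.
Qed.

Lemma preim W f z : permW W f -> z \in W -> exists2 p, p \in W & f p = z.
Proof.
move=> [mW inj] zW.
have e : f @: W = W.
  apply/eqP; rewrite eqEcard card_in_imset // leqnn andbT.
  by apply/subsetP => v /imsetP [u uW ->]; apply: mW.
by move: zW; rewrite -{1}e => /imsetP [p pW ->]; exists p.
Qed.

Lemma exists_out (A : {set T}) (s : seq T) : size s < #|A| -> exists2 u, u \in A & u \notin s.
Proof.
move=> lt; case: (boolP [exists u in A, u \notin s]) => [/exists_inP[u] | /exists_inPn h].
  by exists u.
have : A \subset s by apply/subsetP => u /h; rewrite negbK.
move/subset_leq_card => le; have := leq_trans le (card_size s).
by rewrite leqNgt lt.
Qed.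

Definition IHW W z k (S : {set T}) :=
  forall g, permW (W :\ z) g -> goodL (Dset (W :\ z) g) S k.

Definition sw (a t u : T) := if u == a then t else if u == t then a else u.

Lemma perm_comp W g h : permW W g -> permW W h -> permW W (g \o h).
Proof.
move=> [mg ig] [mh ih]; split; first by move=> u uW /=; apply/mg/mh.
by move=> u v uW vW /= /ig e; apply: ih => //; apply: e; apply: mh.
Qed.

Lemma swK a t : involutive (sw a t).
Proof.
move=> u; rewrite /sw.
case: (eqVneq u a) => [ua | ua].
  subst u; rewrite eqxx; case: (eqVneq t a) => [-> | ta]; first by rewrite ?eqxx.
  by rewrite ?eqxx.
case: (eqVneq u t) => [ut | ut].
  by subst u; rewrite eqxx.
by rewrite (negbTE ua) (negbTE ut).
Qed.

Lemma perm_sw W a t : a \in W -> t \in W -> permW W (sw a t).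
Proof.
move=> aW tW; split.
  by move=> u uW; rewrite /sw; case: eqP => // _; case: eqP.
by move=> u v _ _; apply: (can_inj (swK a t)).
Qed.

End Two.


Section Three.
Variable T : finType.
Implicit Types (D : {set T * T}) (f g : T -> T) (W : {set T}).

Ltac bsplit := repeat (apply/andP; split).
Ltac atom := solve [ done | by rewrite eq_sym ].

Lemma case_gen W f z a b k : permW W f -> z \in W -> a \in W -> b \in W ->
  a != b -> z != a -> z != b -> f a != z -> f b != z -> f z != a -> f z != b ->
  IHW W z k [set a; b] -> goodL (Dset W f) [set a; b] k.+1.
Proof.
move=> pf zW aW bW ab za zb fa fb fza fzb IH.
apply: (ext_step (cs := [:: [:: a; z]; [:: b; z]]) (IH _ (perm_byp pf zW)) (Dset_byp W f z)).
- by rewrite /= !inE eqxx /= ?orbT.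
- rewrite /= !inD !in_setD1 !eqxx /= ?andbF ?andFb /=.
  by bsplit; atom.
- by apply/subsetP => v; rewrite !inE => /orP[]/eqP->; rewrite /= !inE eqxx ?orbT.
Qed.


Ltac arcs_tac := rewrite /= !inD !in_setD1 !eqxx /= ?andbF ?andFb /=.
Ltac hv_tac := apply/subsetP => v; rewrite !inE => /orP[]/eqP->; rewrite /= !inE eqxx /= ?orbT.

Lemma case_B2 W f z a b k : permW W f -> z \in W -> a \in W -> b \in W ->
  a != b -> z != a -> z != b -> f z = a -> f b = z ->
  IHW W z k [set a; b] -> goodL (Dset W f) [set a; b] k.+1.
Proof.
move=> pf zW aW bW ab za zb fz fb IH.
have fa : f a != z by rewrite -fb; apply: inj_ne pf aW bW ab.
apply: (ext_step (cs := [:: [:: a; z; b]]) (IH _ (perm_byp pf zW)) (Dset_byp W f z)).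
- by [].
- arcs_tac; rewrite /byp fb eqxx fz eqxx /= ?andbF /=.
  by bsplit; rewrite ?fz ?fb; atom.
- by hv_tac.
Qed.

Lemma case_B4 W f z a b p k : permW W f -> z \in W -> a \in W -> b \in W -> p \in W ->
  a != b -> z != a -> z != b -> p != a -> p != b -> f z = a -> f p = z ->
  IHW W z k [set a; b] -> goodL (Dset W f) [set a; b] k.+1.
Proof.
move=> pf zW aW bW pW ab za zb pa pb fz fp IH.
have fa : f a != z.
  by rewrite -fp; apply: (inj_ne pf aW pW); rewrite eq_sym.
have fb : f b != z by rewrite -fp; apply: (inj_ne pf bW pW); rewrite eq_sym.
have pz : p != z by apply: contraNneq za => pz; rewrite -fz -pz fp pz.
apply: (ext_step (cs := [:: [:: a; z; p]; [:: b; z]]) (IH _ (perm_byp pf zW)) (Dset_byp W f z)).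
- by rewrite /= !inE eqxx /= ?orbT.
- arcs_tac; rewrite /byp fp eqxx fz eqxx /= ?andbF /=.
  by bsplit; rewrite ?fz ?fp; atom.
- by hv_tac.
Qed.

Lemma case_B6 W f z a b s k : permW W f -> z \in W -> a \in W -> b \in W -> s \in W ->
  a != b -> z != a -> z != b -> s != a -> s != b -> f z = s -> f a = z ->
  IHW W z k [set a; b] -> goodL (Dset W f) [set a; b] k.+1.
Proof.
move=> pf zW aW bW sW ab za zb sa sb fz fa IH.
have fb : f b != z by rewrite -fa; apply: (inj_ne pf bW aW); rewrite eq_sym.
have fs : f s != z by rewrite -fa; apply: (inj_ne pf sW aW).
have sz : s != z by apply: contraNneq za => sz; apply/eqP; apply: (proj2 pf) => //; rewrite fz fa sz.
apply: (ext_step (cs := [:: [:: a; s; z]; [:: b; z]]) (IH _ (perm_byp pf zW)) (Dset_byp W f z)).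
- by rewrite /= !inE eqxx /= ?orbT.
- arcs_tac; rewrite /byp fa eqxx fz eqxx /= ?andbF /=.
  by bsplit; rewrite ?fz ?fa; atom.
- by hv_tac.
Qed.

Definition g2 f z a t := byp f z \o sw a t.

Lemma Dset_g2 W f z a t : f a = z -> f t = t ->
  Dset (W :\ z) (g2 f z a t) \subset Dset W f.
Proof.
move=> fa ft; apply/subsetP => [[u v]]; rewrite !inD !in_setD1 /=.
case/and4P => /andP[uz uW] /andP[vz vW] uv hg; rewrite uW vW uv /=.
case: (eqVneq u a) => [ua | ua]; first by rewrite ua fa eq_sym.
case: (eqVneq u t) => [ut | ut]; first by rewrite ut ft -ut.
move: hg; rewrite /g2 /= /sw (negbTE ua) (negbTE ut) /byp.
by case: (eqVneq (f u) z) => [fuz _|_ //]; rewrite fuz eq_sym.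
Qed.

Lemma case_C W f z a b u0 k : permW W f -> z \in W -> a \in W -> b \in W -> u0 \in W ->
  a != b -> z != a -> z != b -> f z = a -> f a = z -> f u0 = u0 ->
  IHW W z k [set a; b] -> goodL (Dset W f) [set a; b] k.+1.
Proof.
move=> pf zW aW bW uW ab za zb fz fa fu IH.
have fb : f b != z by rewrite -fa; apply: (inj_ne pf bW aW); rewrite eq_sym.
have uz : u0 != z by apply: contraNneq za => uz; rewrite -fz -uz fu uz.
have ua : u0 != a by apply: contraNneq za => ua; rewrite -fa -ua fu ua.
have pg : permW (W :\ z) (g2 f z a u0).
  apply: perm_comp; first exact: perm_byp.
  by apply: perm_sw; rewrite in_setD1 ?aW ?uW ?andbT // eq_sym.
apply: (ext_step (cs := [:: [:: u0; z]; [:: a; u0]; [:: b; z]]) (IH _ pg) (Dset_g2 W fa fu)).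
- by rewrite /= !inE !eqxx /= ?orbT.
- arcs_tac; rewrite /g2 /sw /= eqxx (negbTE ua) eqxx /byp fu (negbTE uz) fa eqxx fz eqxx /= ?andbF /=.
  by rewrite ?eqxx /= ?andbF /=; bsplit; rewrite ?fz ?fa ?fu; atom.
- by hv_tac.
Qed.


Lemma bad_case W f k a b z0 : permW W f -> #|W| = k.+3 -> a \in W -> b \in W -> z0 \in W ->
  a != b -> z0 != a -> z0 != b -> f z0 = a -> f a = z0 ->
  (forall z, z \in W -> z \notin [:: a; b] -> f z \in [:: a; b]) ->
  goodL (Dset W f) [set a; b] k.+1.
Proof.
move=> pf cW aW bW zW ab za zb fz fa hb.
have fb : f b != a by rewrite -fz; apply: (inj_ne pf bW zW); rewrite eq_sym.
case: k cW => [|k] cW.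
  apply: (ext_step (cs := [:: [:: a; b]]) (goodL0 set0 _) (sub0set _)).
  - by [].
  - rewrite /= !inD !in_set0 /=.
    by bsplit; rewrite ?fa; atom.
  - by hv_tac.
have [z1 z1W] : exists2 u, u \in W & u \notin [:: a; b; z0] by apply: exists_out; rewrite cW.
rewrite !inE !negb_or => /and3P [z1a z1b z1z].
have fz1 : f z1 = b.
  have h := hb z1 z1W; rewrite !inE !negb_or z1a z1b in h.
  have /orP[/eqP e|/eqP //] := h isT.
  by move/eqP: z1z; case; apply: (proj2 pf) => //; rewrite e fz.
case: k cW => [|k] cW; last first.
  have [z2 z2W] : exists2 u, u \in W & u \notin [:: a; b; z0; z1] by apply: exists_out; rewrite cW.
  rewrite !inE !negb_or => /and4P [z2a z2b z2z z2z1].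
  have h := hb z2 z2W; rewrite !inE !negb_or z2a z2b in h.
  have /orP[/eqP e|/eqP e] := h isT.
    by move/eqP: z2z; case; apply: (proj2 pf) => //; rewrite e fz.
  by move/eqP: z2z1; case; apply: (proj2 pf) => //; rewrite e fz1.
have g1 : goodL (HA [:: [:: a; b]]) [set a; b] 1.
  apply: (ext_step (cs := [:: [:: a; b]]) (goodL0 set0 _) (sub0set _)).
  - by [].
  - by rewrite /= !inE !eqxx /= ?orbT.
  - by hv_tac.
have ba : b != a by rewrite eq_sym.
have fz1z : f z1 != z0 by rewrite fz1 eq_sym.
have fbz : f b != z0 by rewrite -fa; apply: (inj_ne pf bW aW).
apply: (ext_step (cs := [:: [:: z1; z0]; [:: a; z1]; [:: z0; b]]) g1).
- apply/subsetP => p; rewrite inE /= !inE.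
  move=> h; case/orP: h => /eqP ->; by rewrite /=; bsplit; rewrite ?fa; atom.
- by rewrite /= !inE !eqxx /= ?orbT.
- rewrite /= !inD !inE !xpair_eqE /= (negbTE z1a) (negbTE z1b) (negbTE za) (negbTE zb) (negbTE ab) (negbTE ba) /= ?andbF ?orbF /=.
  by bsplit; rewrite ?fz1 ?fz ?fa; atom.
- by hv_tac.
Qed.

End Three.


Section Four.
Variable T : finType.
Implicit Types (D : {set T * T}) (f g : T -> T) (W : {set T}).

Lemma case_sa W f z a b p k : permW W f -> z \in W -> a \in W -> b \in W -> p \in W ->
  a != b -> z != a -> z != b -> f z = a -> f p = z ->
  (p = a -> exists2 u0, u0 \in W & f u0 = u0) ->
  IHW W z k [set a; b] -> goodL (Dset W f) [set a; b] k.+1.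
Proof.
move=> pf zW aW bW pW ab za zb fz fp hu IH.
case: (eqVneq p a) => [pa | pa].
  have [u0 uW fu] := hu pa; subst p.
  exact: (case_C pf zW aW bW uW ab za zb fz fp fu IH).
case: (eqVneq p b) => [pb | pb].
  subst p; exact: (case_B2 pf zW aW bW ab za zb fz fp IH).
exact: (case_B4 pf zW aW bW pW ab za zb pa pb fz fp IH).
Qed.

Lemma IHW_sym W z k a b : IHW W z k [set a; b] -> IHW W z k [set b; a].
Proof. by rewrite /IHW setUC. Qed.

Lemma goodL_sym D k a b : goodL D [set a; b] k -> goodL D [set b; a] k.
Proof. by rewrite setUC. Qed.

Lemma case_so W f z a b p k : permW W f -> z \in W -> a \in W -> b \in W -> p \in W ->
  a != b -> z != a -> z != b -> f z != a -> f z != b -> f p = z ->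
  IHW W z k [set a; b] -> goodL (Dset W f) [set a; b] k.+1.
Proof.
move=> pf zW aW bW pW ab za zb fza fzb fp IH.
have sW : f z \in W by apply: (proj1 pf).
case: (eqVneq p a) => [pa | pa].
  subst p; exact: (case_B6 pf zW aW bW sW ab za zb fza fzb erefl fp IH).
case: (eqVneq p b) => [pb | pb].
  subst p; apply: goodL_sym.
  by apply: (case_B6 pf zW bW aW sW _ zb za fzb fza erefl fp (IHW_sym IH)); rewrite eq_sym.
have fa : f a != z by rewrite -fp; apply: (inj_ne pf aW pW); rewrite eq_sym.
have fb : f b != z by rewrite -fp; apply: (inj_ne pf bW pW); rewrite eq_sym.
exact: (case_gen pf zW aW bW ab za zb fa fb fza fzb IH).
Qed.

Lemma LB (x y : T) : x != y -> forall k W f, #|W| = k.+2 -> x \in W -> y \in W ->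
  permW W f -> goodL (Dset W f) [set x; y] k.
Proof.
move=> xy; elim=> [|k IH] W f cW xW yW pf; first exact: goodL0.
pose bad z := [&& f z \in [:: x; y], f (f z) == z & [forall u in W, f u != u]].
case: (boolP [exists z in W, (z \notin [:: x; y]) && ~~ bad z]).
  case/exists_inP => z zW /andP[zn gz].
  move: zn; rewrite !inE negb_or => /andP[zx zy].
  have IHz : IHW W z k [set x; y].
    move=> g pg; apply: IH => //; rewrite ?in_setD1 ?xW ?yW ?andbT 1?eq_sym //.
    by have := cardsD1 z W; rewrite zW cW add1n => -[].
  have [p pW fp] := preim pf zW.
  have hu a : f z = a -> a \in [:: x; y] -> p = a -> exists2 u0, u0 \in W & f u0 = u0.
    move=> fza ain pa; move: gz; rewrite /bad fza ain -pa fp eqxx /= negb_forall_in.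
    by case/exists_inP => u uW; rewrite negbK => /eqP; exists u.
  case: (eqVneq (f z) x) => sx.
    apply: (case_sa pf zW xW yW pW xy _ _ sx fp _ IHz); (try done); try by rewrite eq_sym.
    by move=> px; apply: (hu x sx _ px); rewrite !inE eqxx.
  case: (eqVneq (f z) y) => sy.
    apply: goodL_sym; apply: (case_sa pf zW yW xW pW _ _ _ sy fp _ (IHW_sym IHz)); (try done); try by rewrite eq_sym.
    by move=> py; apply: (hu y sy _ py); rewrite !inE eqxx orbT.
  exact: (case_so pf zW xW yW pW xy zx zy sx sy fp IHz).
move/exists_inPn => nog.
have [z0 z0W z0n] : exists2 u, u \in W & u \notin [:: x; y] by apply: exists_out; rewrite cW.
have allb z : z \in W -> z \notin [:: x; y] -> bad z.
  by move=> zW zn; have := nog z zW; rewrite zn /= negbK.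
have /and3P [fz0 ffz0 _] := allb z0 z0W z0n.
have hb z : z \in W -> z \notin [:: x; y] -> f z \in [:: x; y].
  by move=> zW zn; have /and3P [] := allb z zW zn.
move: z0n; rewrite !inE negb_or => /andP[z0x z0y].
move: fz0; rewrite !inE => /orP[/eqP fx | /eqP fy].
  apply: (bad_case pf cW xW yW z0W xy z0x z0y fx _ hb).
  by rewrite -fx; apply/eqP.
apply: goodL_sym; apply: (bad_case pf cW yW xW z0W _ z0y z0x fy _ _); (try done); try by rewrite eq_sym.
  by rewrite -fy; apply/eqP.
move=> z zW zn; have : f z \in [:: x; y].
  by apply: hb => //; move: zn; rewrite !inE !negb_or andbC.
by rewrite !inE orbC.
Qed.

End Four.


Section Five.
Variable T : finType.
Implicit Types (D : {set T * T}) (f g : T -> T) (W : {set T}).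

Lemma goodL_packing D (S : {set T}) m : goodL D S m -> packing D S m.
Proof.
move=> [L [sz al dj]]; apply/existsP.
exists [ffun i : 'I_m => nth (set0, set0) L i]; apply/andP; split.
  apply/forallP => i; rewrite ffunE; apply: (allP al); apply: mem_nth.
  by rewrite sz.
apply/forallP => i; apply/forallP => j; apply/implyP => ij; rewrite !ffunE.
have lt : forall a b : 'I_m, a < b -> [disjoint (nth (set0, set0) L a).2 & (nth (set0, set0) L b).2].
  move=> a b ab; move/(pairwiseP (set0, set0)): dj; apply => //; rewrite inE sz //.
case: (ltngtP i j) => [h | h | h]; first exact: lt.
  by rewrite disjoint_sym; apply: lt.
by move: ij; rewrite (val_inj h) eqxx.
Qed.

Lemma packing_mono D D' (S : {set T}) m : D \subset D' -> packing D S m -> packing D' S m.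
Proof.
move=> sub /existsP [F /andP [h1 h2]]; apply/existsP; exists F; rewrite h2 andbT.
by apply/forallP => i; apply: (strong_mono sub); apply: (forallP h1).
Qed.

Lemma lamS_ge D (S : {set T}) m : packing D S m -> m < (#|T| ^ 2).+2 -> m <= lambdaS D S.
Proof.
move=> pk lt; rewrite /lambdaS.
exact: (leq_bigmax_cond (P := fun i : 'I_(#|T| ^ 2).+2 => packing D S i)
          (F := fun i : 'I_(#|T| ^ 2).+2 => nat_of_ord i) (Ordinal lt) pk).
Qed.

Lemma lamS_le D (S : {set T}) B : (forall m, packing D S m -> m <= B) -> lambdaS D S <= B.
Proof. by move=> h; apply/bigmax_leqP => i /h. Qed.

Lemma bigmin_le_seq (r : seq {set T}) (P : pred {set T}) (F : {set T} -> nat) idx S :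
  S \in r -> P S -> \big[minn/idx]_(i <- r | P i) F i <= F S.
Proof.
elim: r => // a r IH; rewrite inE big_cons => /orP[/eqP <- -> | Sr PS].
  by rewrite geq_minl.
case: (P a); last exact: IH.
by apply: leq_trans (geq_minr _ _) (IH Sr PS).
Qed.

Lemma lamk_le D (S : {set T}) : #|S| == 2 -> lambdak D 2 <= lambdaS D S.
Proof.
move=> cS; rewrite /lambdak.
apply: bigmin_le_seq; [exact: mem_index_enum | exact: cS].
Qed.

Lemma lamk_ge D k : k <= (#|T| ^ 2).+1 ->
  (forall S : {set T}, #|S| == 2 -> k <= lambdaS D S) -> k <= lambdak D 2.
Proof.
move=> kN h; rewrite /lambdak; elim/big_ind: _ => //.
by move=> a b ka kb; rewrite leq_min ka kb.
Qed.

Lemma conn_out (A : {set T * T}) u v : u != v -> connect (arel A) u v -> exists w, (u, w) \in A.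
Proof.
move=> uv /connectP [[|w p] /= pth e]; first by rewrite e eqxx in uv.
by exists w; case/andP: pth.
Qed.

Lemma conn_in (A : {set T * T}) u v : u != v -> connect (arel A) u v -> exists w, (w, v) \in A.
Proof.
move=> uv /connectP [p pth e]; case/lastP: p pth e => [|q w] pth e.
  by rewrite e eqxx in uv.
rewrite last_rcons in e; subst w; rewrite rcons_path in pth.
by case/andP: pth => _ h; exists (last u q).
Qed.

Lemma inj_bound m (P : 'I_m -> T -> bool) (B : {set T}) :
  (forall i, exists w, P i w) -> (forall i j w, P i w -> P j w -> i = j) ->
  (forall i w, P i w -> w \in B) -> m <= #|B|.
Proof.
move=> ex uq inB.
pose g i := xchoose (ex i).
have gP i : P i (g i) := xchooseP (ex i).
have ginj : injective g by move=> i j e; apply: (uq i j (g i)) => //; rewrite e.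
rewrite -{1}(card_ord m) -cardsT -(card_imset _ ginj).
by apply: subset_leq_card; apply/subsetP => w /imsetP [i _ ->]; apply: inB.
Qed.

Lemma UB D x y m : x != y -> packing D [set x; y] m ->
  m <= #|[set v | (x, v) \in D]| /\ m <= #|[set v | (v, x) \in D]|.
Proof.
move=> xy /existsP [F /andP [h1 h2]].
have st i : strong_sub_containing D [set x; y] (F i) := forallP h1 i.
have dj i j w : w \in (F i).2 -> w \in (F j).2 -> i = j.
  move=> wi wj; apply/eqP; apply: contraLR isT => ij.
  have := implyP (forallP (forallP h2 i) j) ij.
  by move/disjointFr => /(_ w wi); rewrite wj.
have cn i : connect (arel (F i).2) x y /\ connect (arel (F i).2) y x.
  case/and4P: (st i) => _ _ sS /forall_inP c.
  have xV : x \in (F i).1 by apply: (subsetP sS); rewrite !inE eqxx.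
  have yV : y \in (F i).1 by apply: (subsetP sS); rewrite !inE eqxx orbT.
  by split; [apply: (forall_inP (c x xV)) | apply: (forall_inP (c y yV))].
have sub i p : p \in (F i).2 -> p \in D.
  by case/and4P: (st i) => s _ _ _; apply: (subsetP s).
split.
  apply: (inj_bound (P := fun i w => (x, w) \in (F i).2)).
  - by move=> i; apply: (conn_out xy (proj1 (cn i))).
  - by move=> i j w; apply: dj.
  - by move=> i w /sub; rewrite inE.
apply: (inj_bound (P := fun i w => (w, x) \in (F i).2)).
- by move=> i; apply: (conn_in _ (proj2 (cn i))); rewrite eq_sym.
- by move=> i j w; apply: dj.
- by move=> i w /sub; rewrite inE.
Qed.

End Five.


Section Six.
Variable T : finType.
Implicit Types (f g : T -> T).

Definition Mf f : {set T * T} := [set p | (f p.1 == p.2) && (p.1 != p.2)].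
Definition fix1 f := forall u v, f u = u -> f v = v -> u = v.

Lemma card_le1 (A : {set T}) : {in A &, forall u v, u = v} -> #|A| <= 1.
Proof.
move=> h; case: (set_0Vmem A) => [-> | [a aA]]; first by rewrite cards0.
rewrite -(cards1 a); apply: subset_leq_card; apply/subsetP => u uA.
by rewrite inE (h u a uA aA).
Qed.

Lemma card_le1_eq (A : {set T}) u v : #|A| <= 1 -> u \in A -> v \in A -> u = v.
Proof.
move=> c uA vA; apply/eqP; apply: contraLR c => uv.
rewrite -ltnNge; have : [set u; v] \subset A by apply/subsetP => w; rewrite !inE => /orP[]/eqP->.
by move/subset_leq_card; rewrite cards2 uv.
Qed.

Lemma uniq_flat_mem (C : seq (seq T)) c1 c2 u : uniq (flatten C) ->
  c1 \in C -> c2 \in C -> u \in c1 -> u \in c2 -> c1 = c2.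
Proof.
elim: C => //= c C IH; rewrite cat_uniq => /and3P [_ nh uf].
have inF c' : c' \in C -> u \in c' -> u \in flatten C by move=> h1 h2; apply/flattenP; exists c'.
rewrite !inE => /orP[/eqP -> | h1] /orP[/eqP -> | h2] u1 u2 //.
- by case/negP: nh; apply/hasP; exists u => //; apply: inF h2 u2.
- by case/negP: nh; apply/hasP; exists u => //; apply: inF h1 u1.
- exact: IH.
Qed.

Lemma uniq_flat_each (C : seq (seq T)) c : uniq (flatten C) -> c \in C -> uniq c.
Proof.
elim: C => //= c' C IH; rewrite cat_uniq => /and3P [u1 _ uf].
by rewrite inE => /orP[/eqP -> | /IH]; [|apply].
Qed.

Lemma next_ne (c : seq T) u : uniq c -> 1 < size c -> u \in c -> next c u != u.
Proof.
move=> uc sc uin; case: (rot_to uin) => i q e.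
rewrite -(next_rot i uc) e.
have : uniq (u :: q) by rewrite -e rot_uniq.
have : 0 < size q by move: sc; rewrite -(size_rot i) e.
case: q {e} => [//|w q] _ /=; rewrite eqxx inE negb_or => /andP[/andP[uw _] _].
by rewrite eq_sym.
Qed.

Lemma size2 (s : seq T) a b : a \in s -> b \in s -> a != b -> 1 < size s.
Proof.
case: s => [|c [|d s']] //=; rewrite !inE => /eqP -> /eqP ->; by rewrite eqxx.
Qed.

Definition cf (C : seq (seq T)) u := next (nth [::] C (find (fun c => u \in c) C)) u.

Lemma cf_cov C c u : uniq (flatten C) -> c \in C -> u \in c -> cf C u = next c u.
Proof.
move=> uf cin uc; rewrite /cf.
have hs : has (fun c => u \in c) C by apply/hasP; exists c.
have := nth_find [::] hs; set c' := nth _ _ _ => uc'.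
have c'in : c' \in C by apply: mem_nth; rewrite -has_find.
by rewrite (uniq_flat_mem uf c'in cin uc' uc).
Qed.

Lemma cf_unc C u : u \notin flatten C -> cf C u = u.
Proof.
move=> un; rewrite /cf hasNfind ?nth_default //.
by apply: contra un => /hasP [c cin uc]; apply/flattenP; exists c.
Qed.

Lemma C2f (C : seq (seq T)) : all (fun c => 1 < size c) C -> uniq (flatten C) ->
  #|[set x | x \notin flatten C]| <= 1 ->
  exists f, [/\ injective f, fix1 f & cycles_arcs C = Mf f].
Proof.
move=> /allP sz uf c1; exists (cf C).
have cov u : (cf C u \in flatten C) = (u \in flatten C).
  case: (boolP (u \in flatten C)) => [/flattenP [c cin uc] | un]; last by rewrite (cf_unc un) (negbTE un).
  by apply/flattenP; exists c => //; rewrite (cf_cov uf cin uc) mem_next.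
have fne u : u \in flatten C -> cf C u != u.
  case/flattenP => c cin uc; rewrite (cf_cov uf cin uc).
  by apply: next_ne => //; [apply: (uniq_flat_each uf) | apply: sz].
split.
- move=> u v e.
  case: (boolP (u \in flatten C)) => [/flattenP [c cin uc] | un].
    have : v \in flatten C by rewrite -cov -e cov; apply/flattenP; exists c.
    case/flattenP => c' c'in vc'.
    have e1 := cf_cov uf cin uc; have e2 := cf_cov uf c'in vc'.
    have cc : c = c'.
      apply: (uniq_flat_mem uf cin c'in (u := cf C u)); first by rewrite e1 mem_next.
      by rewrite e e2 mem_next.
    subst c'; have ucc := uniq_flat_each uf cin.
    by rewrite -(prev_next ucc u) -(prev_next ucc v) -e1 -e2 e.
  have vn : v \notin flatten C by rewrite -cov -e cov.
  by rewrite -(cf_unc un) e cf_unc.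
- move=> u v eu ev.
  have un : u \notin flatten C by apply/negP => /fne; rewrite eu eqxx.
  have vn : v \notin flatten C by apply/negP => /fne; rewrite ev eqxx.
  by apply: (card_le1_eq c1); rewrite inE.
- apply/setP => [[u v]]; rewrite !inE /=; apply/hasP/andP.
    case=> c cin /andP [uc /eqP ->]; split.
      by rewrite (cf_cov uf cin uc).
    rewrite eq_sym; apply: next_ne => //; [apply: (uniq_flat_each uf) | apply: sz] => //.
  case=> /eqP fu uv.
  have : u \in flatten C.
    by apply: contraNT uv => un; rewrite -fu cf_unc.
  case/flattenP => c cin uc; exists c => //; rewrite uc /=.
  by rewrite -fu (cf_cov uf cin uc).
Qed.

End Six.


Section Seven.
Variable T : finType.
Implicit Types (f g : T -> T).

Lemma uniq_flatten_map (g : T -> seq T) (s : seq T) : uniq s ->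
  {in s, forall x, uniq (g x)} ->
  {in s &, forall x y, x != y -> ~~ has (mem (g x)) (g y)} ->
  uniq (flatten (map g s)).
Proof.
elim: s => //= a s IH /andP [an us] ug dj.
rewrite cat_uniq ug ?inE ?eqxx //= IH //; last first.
- by move=> x y xs ys; apply: dj; rewrite inE ?xs ?ys orbT.
- by move=> x xs; apply: ug; rewrite inE xs orbT.
rewrite andbT; apply/hasP => -[w /flatten_mapP [y ys wy] wa].
have ay : a != y by apply: contraNneq an => ->.
have := dj a y; rewrite !inE eqxx ys orbT => /(_ isT isT ay).
by case/negP; apply/hasP; exists w.
Qed.

Section F.
Variable f : T -> T.
Hypothesis injf : injective f.
Let symf := fconnect_sym injf.

Lemma fixed_conn r u : f r = r -> fconnect f r u -> u = r.
Proof.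
move=> fr; rewrite fconnect_orbit => /trajectP [i _ ->]; exact: iter_fix.
Qed.

Definition Croots := [seq r <- enum T | (froot f r == r) && (f r != r)].
Definition Cf := map (orbit f) Croots.

Lemma in_Cf_flat u : f u != u -> u \in flatten Cf.
Proof.
move=> fu; apply/flatten_mapP; exists (froot f u).
  rewrite mem_filter mem_enum andbT (root_root symf) eqxx /=.
  apply: contra fu => /eqP fr; apply/eqP.
  have e : u = froot f u by apply: (fixed_conn fr); rewrite symf connect_root.
  by rewrite e fr.
by rewrite -fconnect_orbit symf connect_root.
Qed.

Lemma f2C : fix1 f -> exists C : seq (seq T),
  [/\ all (fun c => 1 < size c) C, uniq (flatten C), Mf f = cycles_arcs C &
      #|[set x | x \notin flatten C]| <= 1].
Proof.
move=> f1; exists Cf; split.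
- apply/allP => c /mapP [r]; rewrite mem_filter => /andP[/andP[_ fr] _] ->.
  apply: (size2 (a := r) (b := f r)); rewrite -?fconnect_orbit ?connect0 ?fconnect1 //.
  by rewrite eq_sym.
- apply: uniq_flatten_map; first by apply: filter_uniq; apply: enum_uniq.
    by move=> x _; apply: orbit_uniq.
  move=> r1 r2; rewrite !mem_filter => /andP[/andP[/eqP h1 _] _] /andP[/andP[/eqP h2 _] _] r12.
  apply/hasP => -[w w2 w1]; case/negP: r12; apply/eqP.
  have c1 : fconnect f r1 w by rewrite fconnect_orbit.
  have c2 : fconnect f r2 w by rewrite fconnect_orbit.
  rewrite -h1 -h2; apply/(rootP symf).
  by apply: connect_trans c1 _; rewrite symf.
- apply/setP => [[u v]]; rewrite !inE /= has_map; apply/andP/hasP.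
    case=> /eqP fu uv; exists (froot f u).
      rewrite mem_filter mem_enum andbT (root_root symf) eqxx /=.
      apply/negP => /eqP fr; case/negP: uv; apply/eqP.
      have e : u = froot f u by apply: (fixed_conn fr); rewrite symf connect_root.
      by rewrite -fu e fr.
    have uin : u \in orbit f (froot f u) by rewrite -fconnect_orbit symf connect_root.
    rewrite /= uin /=.
    have /eqP <- := next_cycle (cycle_orbit injf (froot f u)) uin.
    by rewrite fu.
  case=> r; rewrite mem_filter => /andP[/andP[_ fr] _] /andP [ur /eqP vn].
  have /eqP e := next_cycle (cycle_orbit injf r) ur.
  rewrite vn -e; split => //; apply/negP => /eqP uf.
  have fu : f u = u by rewrite -uf.
  have cr : fconnect f r u by rewrite fconnect_orbit.
  have e2 : r = u by apply: (fixed_conn fu); rewrite symf.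
  by rewrite e2 fu eqxx in fr.
- apply: card_le1 => u v; rewrite !inE => un vn; apply: f1.
    by apply/eqP; apply: contraNT un; apply: in_Cf_flat.
  by apply/eqP; apply: contraNT vn; apply: in_Cf_flat.
Qed.

End F.
End Seven.


Section Eight.
Variable T : finType.
Implicit Types (D : {set T * T}) (f g : T -> T).

Lemma Dset_T f : complete_arcs T :\: Mf f = Dset setT f.
Proof.
apply/setP => [[u v]]; rewrite !inE /=.
by case: (u != v); case: (f u == v).
Qed.

Lemma nbounds (n : nat) : 2 <= n -> n - 2 <= (n ^ 2).+1 /\ n - 2 < (n ^ 2).+2.
Proof. move=> h; rewrite expnS expn1; split; nia. Qed.

Lemma LBT f : injective f -> 2 <= #|T| -> forall D, Dset setT f \subset D ->
  #|T| - 2 <= lambdak D 2.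
Proof.
move=> injf n2 D sub; have [b1 b2] := nbounds n2.
apply: lamk_ge => // S /cards2P [a [b [ab ->]]].
apply: lamS_ge => //; apply: (packing_mono sub); apply: goodL_packing.
apply: (LB ab); rewrite ?in_setT //; first by rewrite cardsT; lia.
by split => // u v _ _; apply: injf.
Qed.

Lemma lamk_deg D u v : u != v ->
  lambdak D 2 <= #|[set w | (u, w) \in D]| /\ lambdak D 2 <= #|[set w | (w, u) \in D]|.
Proof.
move=> uv; have le := lamk_le D (S := [set u; v]); rewrite cards2 uv in le.
have le' := le isT.
split; apply: leq_trans le' _; apply: lamS_le => m /(UB uv) []//.
Qed.

Lemma card3C (a b c : T) : a != b -> a != c -> b != c ->
  #|~: [set a; b; c]| = #|T| - 3 /\ 3 <= #|T|.
Proof.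
move=> ab ac bc.
have c3 : #|[set a; b; c]| = 3.
  have -> : [set a; b; c] = c |: [set a; b] by rewrite setUC.
  by rewrite cardsU1 cards2 ab !inE negb_or !(eq_sym c) ac bc.
have := cardsC [set a; b; c]; rewrite c3 => e.
split; lia.
Qed.

Lemma deg_small D x (a b c : T) : a != b -> a != c -> b != c ->
  x <= #|~: [set a; b; c]| -> lambdak D 2 <= x -> lambdak D 2 < #|T| - 2.
Proof.
move=> ab ac bc hx hl; have [e n3] := card3C ab ac bc; rewrite e in hx; lia.
Qed.

End Eight.


Section Nine.
Variable T : finType.
Implicit Types (D : {set T * T}) (f g : T -> T).

Lemma dir_back f : injective f -> fix1 f -> 2 <= #|T| ->
  minimally_strong_arc_conn (complete_arcs T :\: Mf f) 2 (#|T| - 2).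
Proof.
move=> injf f1 n2; rewrite Dset_T; split; first exact: (LBT injf n2 (subxx _)).
have pf : permW setT f by split => // u v _ _; apply: injf.
move=> [u v]; rewrite inD !in_setT /= => /andP [uv fuv].
case: (eqVneq (f u) u) => fu.
- have fv : f v != v by apply: contraNneq uv => fv; apply/eqP; apply: f1.
  have [q _ fq] := preim pf (in_setT v).
  have vq : v != q by apply: contraNneq fv => vq; rewrite {1}vq fq.
  have qu : q != u by apply: contraNneq fuv => qu; rewrite -fq qu fu.
  have vu : v != u by rewrite eq_sym.
  have [_ h] := lamk_deg (Dset setT f :\ (u, v)) vu.
  apply: (deg_small vq vu qu _ h); apply: subset_leq_card.
  apply/subsetP => w; rewrite !inE /= => /and3P [wuv wv fwv].
  rewrite !negb_or wv /=; apply/andP; split.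
    by apply: contraNneq fwv => ->; rewrite fq.
  by apply: contraNneq wuv => ->.
- have [h _] := lamk_deg (Dset setT f :\ (u, v)) uv.
  have fuv' : f u != v by [].
  apply: (deg_small (b := f u) (c := v) _ uv fuv' _ h); first by rewrite eq_sym.
  apply: subset_leq_card; apply/subsetP => w; rewrite !inE /= => /and3P [wuv uw fuw].
  rewrite !negb_or eq_sym uw (eq_sym w) fuw /=.
  by apply: contraNneq wuv => ->.
Qed.

End Nine.


Section Ten.
Variable T : finType.
Implicit Types (D N : {set T * T}) (f g : T -> T).

Lemma full_set (A : {set T}) : #|A| = #|T| -> A = setT.
Proof. by move=> h; apply/eqP; rewrite eqEcard subsetT /= h cardsT. Qed.

Definition okN (M N : {set T * T}) := [&& N \subset complete_arcs T, M \subset N,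
  [forall u, forall v, forall v', ((u, v) \in N) && ((u, v') \in N) ==> (v == v')] &
  [forall u, forall u', forall v, ((u, v) \in N) && ((u', v) \in N) ==> (u == u')]].

Lemma okP (M N : {set T * T}) : okN M N -> [/\ N \subset complete_arcs T, M \subset N,
  (forall u v v', (u, v) \in N -> (u, v') \in N -> v = v') &
  (forall u u' v, (u, v) \in N -> (u', v) \in N -> u = u')].
Proof.
case/and4P => h1 h2 h3 h4; split => //.
  move=> u v v' a b; apply/eqP.
  by have := implyP (forallP (forallP (forallP h3 u) v) v'); rewrite a b; apply.
move=> u u' v a b; apply/eqP.
by have := implyP (forallP (forallP (forallP h4 u) u') v); rewrite a b; apply.
Qed.

Lemma okI (M N : {set T * T}) : N \subset complete_arcs T -> M \subset N ->
  (forall u v v', (u, v) \in N -> (u, v') \in N -> v = v') ->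
  (forall u u' v, (u, v) \in N -> (u', v) \in N -> u = u') -> okN M N.
Proof.
move=> h1 h2 h3 h4; apply/and4P; split => //.
  apply/forallP => u; apply/forallP => v; apply/forallP => v'; apply/implyP => /andP[a b].
  by rewrite (h3 _ _ _ a b).
apply/forallP => u; apply/forallP => u'; apply/forallP => v; apply/implyP => /andP[a b].
by rewrite (h4 _ _ _ a b).
Qed.

End Ten.

Section Ext.
Variable T : finType.

Lemma max_ext (M : {set T * T}) : okN M M ->
  exists f : T -> T, [/\ injective f, fix1 f & M \subset Mf f].
Proof.
move=> okM.
have [Ms okMs maxMs] := arg_maxnP (fun N : {set T * T} => #|N|) okM.
have [Msc MMs outs ins] := okP okMs.
pose O := [set u | [exists v, (u, v) \in Ms]].
pose I := [set v | [exists u, (u, v) \in Ms]].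
have inO u v : (u, v) \in Ms -> u \in O by move=> h; rewrite inE; apply/existsP; exists v.
have inI u v : (u, v) \in Ms -> v \in I by move=> h; rewrite inE; apply/existsP; exists u.
have loopf u v : (u, v) \in Ms -> u != v by move/(subsetP Msc); rewrite inE.
have maxl u v : u \notin O -> v \notin I -> u = v.
  move=> uO vI; apply/eqP/negPn/negP => uv.
  pose N := (u, v) |: Ms.
  have okN' : okN M N.
    apply: okI.
    - apply/subsetP => p; rewrite in_setU1 => /orP[/eqP -> | /(subsetP Msc)] //.
      by rewrite inE.
    - exact: subset_trans MMs (subsetU1 _ _).
    - move=> a b b'; rewrite !in_setU1 !xpair_eqE.
      case/orP => [/andP[/eqP -> /eqP ->] | h]; case/orP => [/andP[/eqP e /eqP ->] | h'] //.
      + by case/negP: uO; apply: (inO _ b').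
      + by case/negP: uO; move: h; rewrite e => /inO.
      + exact: outs h h'.
    - move=> a a' b; rewrite !in_setU1 !xpair_eqE.
      case/orP => [/andP[/eqP -> /eqP ->] | h]; case/orP => [/andP[/eqP -> /eqP e] | h'] //.
      + by case/negP: vI; apply: (inI a').
      + by case/negP: vI; move: h; rewrite e => /inI.
      + exact: ins h h'.
  have := maxMs N okN'; rewrite /N cardsU1.
  have -> : (u, v) \notin Ms by apply: contra uO => /inO.
  by move=> /= h; lia.
have cO : #|O| = #|Ms|.
  have -> : O = [set p.1 | p in Ms].
    apply/setP => u; rewrite inE; apply/existsP/imsetP => [[v h] | [[a b] h ->]].
      by exists (u, v).
    by exists b.
  apply: card_in_imset => [[a b] [a' b']] h h' /= e; subst a'.
  by rewrite (outs _ _ _ h h').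
have cI : #|I| = #|Ms|.
  have -> : I = [set p.2 | p in Ms].
    apply/setP => u; rewrite inE; apply/existsP/imsetP => [[v h] | [[a b] h ->]].
      by exists (v, u).
    by exists a.
  apply: card_in_imset => [[a b] [a' b']] h h' /= e; subst b'.
  by rewrite (ins _ _ _ h h').
have OI u : (u \in O) = (u \in I).
  case: (boolP (u \in O)) => uO; case: (boolP (u \in I)) => uI //.
    have allO w : w \in O.
      by apply/negPn/negP => wO; have e := maxl w u wO uI; subst w; rewrite uO in wO.
    have : I = setT.
      apply: full_set; rewrite cI -cO.
      have -> : O = setT by apply/setP => w; rewrite allO inE.
      by rewrite cardsT.
    by move=> e; rewrite e inE in uI.
  have allI w : w \in I.
    by apply/negPn/negP => wI; have e := maxl u w uO wI; subst w; rewrite uI in wI.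
  have : O = setT.
    apply: full_set; rewrite cO -cI.
    have -> : I = setT by apply/setP => w; rewrite allI inE.
    by rewrite cardsT.
  by move=> e; rewrite e inE in uO.
pose f u := odflt u [pick v | (u, v) \in Ms].
have fO u : u \in O -> (u, f u) \in Ms.
  rewrite /f; case: pickP => [v //| none].
  by rewrite inE => /existsP [v h]; rewrite none in h.
have fN u : u \notin O -> f u = u.
  rewrite /f; case: pickP => [v h | //].
  by move=> uO; case/negP: uO; apply: (inO _ v).
exists f; split.
- move=> u v e.
  case: (boolP (u \in O)) => uO; case: (boolP (v \in O)) => vO.
  + by apply: (ins _ _ (f u) (fO u uO)); rewrite e; apply: fO.
  + have := fO u uO; rewrite e (fN v vO) => /inI; rewrite -OI.
    by rewrite (negbTE vO).
  + have := fO v vO; rewrite -e (fN u uO) => /inI; rewrite -OI.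
    by rewrite (negbTE uO).
  + by rewrite -(fN u uO) e fN.
- move=> u v fu fv.
  have nO w : f w = w -> w \notin O.
    move=> fw; apply/negP => wO; have := loopf _ _ (fO w wO).
    by rewrite fw eqxx.
  by apply: maxl; [apply: nO | rewrite -OI; apply: nO].
- apply/subsetP => [[u v]] /(subsetP MMs) h; rewrite inE /=.
  have uO := inO _ _ h; rewrite (loopf _ _ h) andbT.
  by rewrite (outs _ _ _ (fO u uO) h).
Qed.

End Ext.


Section Eleven.
Variable T : finType.

Lemma dir_fwd (D : {set T * T}) : 2 <= #|T| -> loopless D ->
  minimally_strong_arc_conn D 2 (#|T| - 2) ->
  exists f : T -> T, [/\ injective f, fix1 f & D = complete_arcs T :\: Mf f].
Proof.
move=> n2 lD [h1 h2].
pose M := complete_arcs T :\: D.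
have lDp u v : (u, v) \in D -> u != v by move/(subsetP lD); rewrite inE.
have inM u v : ((u, v) \in M) = (u != v) && ((u, v) \notin D).
  by rewrite !inE andbC.
have deg u : #|T| - 2 <= #|[set w | (u, w) \in D]| /\ #|T| - 2 <= #|[set w | (w, u) \in D]|.
  have [w _ wu] : exists2 w, w \in [set: T] & w \notin [:: u] by apply: exists_out; rewrite cardsT.
  rewrite inE in wu.
  have uw : u != w by rewrite eq_sym.
  have [a b] := lamk_deg D uw.
  by split; [apply: leq_trans h1 a | apply: leq_trans h1 b].
have outf u v v' : (u, v) \in M -> (u, v') \in M -> v = v'.
  rewrite !inM => /andP [uv vD] /andP [uv' v'D]; apply/eqP/negPn/negP => vv'.
  have [d _] := deg u.
  have : #|[set w | (u, w) \in D]| <= #|~: [set u; v; v']|.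
    apply: subset_leq_card; apply/subsetP => w; rewrite !inE => wD.
    rewrite !negb_or -andbA; apply/and3P; split.
    - by rewrite eq_sym; apply: lDp wD.
    - by apply: contraNneq vD => <-.
    - by apply: contraNneq v'D => <-.
  have [e n3] := card3C uv uv' vv'; rewrite e; lia.
have inf u u' v : (u, v) \in M -> (u', v) \in M -> u = u'.
  rewrite !inM => /andP [uv uD] /andP [u'v u'D]; apply/eqP/negPn/negP => uu'.
  have [_ d] := deg v.
  have vu : v != u by rewrite eq_sym.
  have vu' : v != u' by rewrite eq_sym.
  have : #|[set w | (w, v) \in D]| <= #|~: [set v; u; u']|.
    apply: subset_leq_card; apply/subsetP => w; rewrite !inE => wD.
    rewrite !negb_or -andbA; apply/and3P; split.
    - by rewrite eq_sym; move: (lDp _ _ wD); rewrite eq_sym.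
    - by apply: contraNneq uD => <-.
    - by apply: contraNneq u'D => <-.
  have [e n3] := card3C vu vu' uu'; rewrite e; lia.
have okM : okN M M.
  apply: okI => //; first exact: subsetDl.
have [f [injf f1 sub]] := max_ext okM.
exists f; split => //.
have MM : Mf f \subset M.
  apply/subsetP => e eMf; apply/negPn/negP => eM.
  have eD : e \in D.
    move: eM; rewrite inE negb_and negbK => /orP[//|].
    by move: eMf; case: e => u v; rewrite !inE /= => /andP[_ ->].
  have := h2 e eD; rewrite ltnNge => /negP; apply.
  apply: (LBT injf n2); apply/subsetP => p; rewrite -Dset_T in_setD => /andP [pM pc].
  rewrite in_setD1; apply/andP; split.
    by apply: contraNneq pM => ->.
  apply/negPn/negP => pD; case/negP: pM; apply: (subsetP sub).
  by rewrite in_setD pD pc.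
have eM : Mf f = M by apply/eqP; rewrite eqEsubset MM sub.
rewrite eM; apply/setP => p; rewrite !in_setD.
case: (boolP (p \in D)) => pD /=; first by rewrite (subsetP lD p pD).
by rewrite andNb.
Qed.

End Eleven.


Theorem theorem5p2 (T : finType) (D : {set T * T}) :
  2 <= #|T| -> loopless D ->
  minimally_strong_arc_conn D 2 (#|T| - 2) <->
  exists M : {set T * T},
    D = complete_arcs T :\: M /\ disjoint_cycles_cover_but_one M.
Proof.
move=> n2 lD; split.
  move=> h; have [f [injf f1 eD]] := dir_fwd n2 lD h.
  have [C [sz uf eM c1]] := f2C injf f1.
  by exists (Mf f); split => //; exists C; split.
case=> M [-> [C [sz uf eM c1]]].
have [f [injf f1 eMf]] := C2f sz uf c1.
by rewrite eM eMf; apply: dir_back.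
Qed.
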